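(* For every sequent $\Gamma\Rightarrow\Delta$ of $\mathtt{TPDL}$: if $\Gamma\Rightarrow\Delta$ is valid, then $\Gamma\Rightarrow\Delta$ is provable in $\mathtt{GTPDL}$.
   Context: Fix sets $\mathsf{Prop}$ of propositional variables and $\mathsf{AtProg}$ of atomic programs. Formulas and programs of $\mathtt{TPDL}$ are defined by mutual induction: $\varphi ::= \bot \mid p \mid (\varphi\to\varphi) \mid [\pi]\varphi \mid [\pi]^{\leftarrow}\varphi$ and $\pi ::= \alpha \mid \pi;\pi \mid \pi\cup\pi \mid \pi^{*} \mid \varphi?$, where $p\in\mathsf{Prop}$, $\alpha\in\mathsf{AtProg}$. Abbreviations: $\neg\varphi:=\varphi\to\bot$; for a set $\Gamma$, $[\pi]\Gamma=\{[\pi]\varphi:\varphi\in\Gamma\}$, $[\pi]^{\leftarrow}\Gamma=\{[\pi]^{\leftarrow}\varphi:\varphi\in\Gamma\}$. A model is $M=(W,(R_\alpha)_{\alpha\in\mathsf{AtProg}},V)$, $W\neq\emptyset$, $R_\alpha\subseteq W\times W$, $V:W\to\mathcal P(\mathsf{Prop})$. $R_{\pi_0;\pi_1}$ is relational composition, $R_{\pi_0\cup\pi_1}=R_{\pi_0}\cup R_{\pi_1}$, $R_{\pi^*}$ the reflexive–transitive closure of $R_\pi$, $R_{\psi?}=\{(w,w):M,w\models\psi\}$. $M,w\not\models\bot$; $M,w\models p$ iff $p\in V(w)$; $\to$ classical; $M,w\models[\pi]\varphi$ iff $M,v\models\varphi$ whenever $wR_\pi v$; $M,w\models[\pi]^{\leftarrow}\varphi$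 iff $M,v\models\varphi$ whenever $vR_\pi w$. A sequent $\Gamma\Rightarrow\Delta$ is a pair of finite sets of formulas; it is valid if in every model at every state, truth of all formulas of $\Gamma$ implies truth of some formula of $\Delta$. $\mathtt{GTPDL}$ rules (premises / conclusion): (Ax) / $\Gamma\Rightarrow\Delta$ with $\Gamma\cap\Delta\neq\emptyset$; ($\bot$) / $\Gamma,\bot\Rightarrow\Delta$; ($\to$L) $\Gamma\Rightarrow\varphi,\Delta$ and $\Gamma,\psi\Rightarrow\Delta$ / $\Gamma,\varphi\to\psi\Rightarrow\Delta$; ($\to$R) $\Gamma,\varphi\Rightarrow\psi,\Delta$ / $\Gamma\Rightarrow\varphi\to\psi,\Delta$; (Wk) $\Gamma\Rightarrow\Delta$ / $\Gamma'\Rightarrow\Delta'$ with $\Gamma\subseteq\Gamma',\Delta\subseteq\Delta'$; (Cut) $\Gamma\Rightarrow\varphi,\Delta$ and $\Gamma,\varphi\Rightarrow\Delta$ / $\Gamma\Rightarrow\Delta$; ($[\,]$) $\Gamma\Rightarrow\varphi,[\pi]^{\leftarrow}\Delta$ / $[\pi]\Gamma\Rightarrow[\pi]\varphi,\Delta$; ($[\,]^{\leftarrow}$) $\Gamma\Rightarrow\varphi,[\pi]\Delta$ / $[\pi]^{\leftarrow}\Gamma\Rightarrow[\pi]^{\leftarrow}\varphi,\Delta$; ($[;]$L) $\Gamma,[\pi_0][\pi_1]\varphi\Rightarrow\Delta$ / $\Gamma,[\pi_0;\pi_1]\varphi\Rightarrow\Delta$; ($[;]$R) $\Gamma\Rightarrow[\pi_0][\pi_1]\varphi,\Delta$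 / $\Gamma\Rightarrow[\pi_0;\pi_1]\varphi,\Delta$; ($[\cup]$L) $\Gamma,[\pi_0]\varphi,[\pi_1]\varphi\Rightarrow\Delta$ / $\Gamma,[\pi_0\cup\pi_1]\varphi\Rightarrow\Delta$; ($[\cup]$R) $\Gamma\Rightarrow\Delta,[\pi_0]\varphi$ and $\Gamma\Rightarrow\Delta,[\pi_1]\varphi$ / $\Gamma\Rightarrow[\pi_0\cup\pi_1]\varphi,\Delta$; ($[*]$L) $\Gamma,\varphi,[\pi][\pi^*]\varphi\Rightarrow\Delta$ / $\Gamma,[\pi^*]\varphi\Rightarrow\Delta$; ($[*]$R) $\Gamma,\varphi\Rightarrow[\pi]\varphi$ / $[\pi^*]\Gamma,\varphi\Rightarrow[\pi^*]\varphi$; ($[?]$L) $\Gamma\Rightarrow\varphi,\Delta$ and $\Gamma,\psi\Rightarrow\Delta$ / $\Gamma,[\varphi?]\psi\Rightarrow\Delta$; ($[?]$R) $\Gamma,\varphi\Rightarrow\psi,\Delta$ / $\Gamma\Rightarrow[\varphi?]\psi,\Delta$. A $\mathtt{GTPDL}$ proof is a finite tree of sequents, each node the conclusion of a rule instance whose premises are its children (leaves are Ax or $\bot$ instances); provable means having such a proof with the given sequent at the root. *)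

(* Defs.v *)
From Stdlib Require Import List Relations.
Import ListNotations.
Set Implicit Arguments.

Section TPDL.
Variables (Prp AtProg : Type).

Inductive form : Type :=
| FBot : form
| FVar : Prp -> form
| FImp : form -> form -> form
| FBox : prog -> form -> form
| FBoxC : prog -> form -> form
with prog : Type :=
| PAt : AtProg -> prog
| PSeq : prog -> prog -> prog
| PCup : prog -> prog -> prog
| PStar : prog -> prog
| PTest : form -> prog.

Record model : Type := Model {
  mW : Type;
  mW_inhab : inhabited mW;
  mR : AtProg -> mW -> mW -> Prop;
  mV : mW -> Prp -> Prop
}.

Fixpoint sat (M : model) (w : mW M) (phi : form) {struct phi} : Prop :=
  match phi with
  | FBot => False
  | FVar p => mV M w p
  | FImp a b => sat M w a -> sat M w b
  | FBox pi a => forall v, rel M pi w v -> sat M v a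
  | FBoxC pi a => forall v, rel M pi v w -> sat M v a
  end
with rel (M : model) (pi : prog) (w v : mW M) {struct pi} : Prop :=
  match pi with
  | PAt al => mR M al w v
  | PSeq p0 p1 => exists u, rel M p0 w u /\ rel M p1 u v
  | PCup p0 p1 => rel M p0 w v \/ rel M p1 w v
  | PStar p => clos_refl_trans (mW M) (fun x y => rel M p x y) w v
  | PTest a => w = v /\ sat M w a
  end.

(* Finite sets of formulas are represented by lists (read as their set of
   members). *)
Definition sequent : Type := (list form * list form)%type.

Definition valid (s : sequent) : Prop :=
  forall (M : model) (w : mW M),
    (forall phi, In phi (fst s) -> sat M w phi) ->
    exists psi, In psi (snd s) /\ sat M w psi.

Definition incl_l (G G' : list form) : Prop := forall x, In x G -> In x G'.

Definition box (pi : prog) (G : list form) := map (FBox pi) G.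
Definition boxC (pi : prog) (G : list form) := map (FBoxC pi) G.

(* GTPDL derivability.  Since sets are represented by lists, ",phi" is
   consing; rule (Wk), which is part of the calculus, absorbs any
   difference between lists denoting the same set. *)
Inductive provable : list form -> list form -> Prop :=
| R_Ax : forall G D phi, In phi G -> In phi D -> provable G D
| R_Bot : forall G D, provable (FBot :: G) D
| R_ImpL : forall G D a b,
    provable G (a :: D) -> provable (b :: G) D -> provable (FImp a b :: G) D
| R_ImpR : forall G D a b,
    provable (a :: G) (b :: D) -> provable G (FImp a b :: D)
| R_Wk : forall G D G' D',
    provable G D -> incl_l G G' -> incl_l D D' -> provable G' D'
| R_Cut : forall G D a,
    provable G (a :: D) -> provable (a :: G) D -> provable G D
| R_Box : forall G D pi a,
    provable G (a :: boxC pi D) -> provable (box pi G) (FBox pi a :: D)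
| R_BoxC : forall G D pi a,
    provable G (a :: box pi D) -> provable (boxC pi G) (FBoxC pi a :: D)
| R_SeqL : forall G D p0 p1 a,
    provable (FBox p0 (FBox p1 a) :: G) D ->
    provable (FBox (PSeq p0 p1) a :: G) D
| R_SeqR : forall G D p0 p1 a,
    provable G (FBox p0 (FBox p1 a) :: D) ->
    provable G (FBox (PSeq p0 p1) a :: D)
| R_CupL : forall G D p0 p1 a,
    provable (FBox p0 a :: FBox p1 a :: G) D ->
    provable (FBox (PCup p0 p1) a :: G) D
| R_CupR : forall G D p0 p1 a,
    provable G (D ++ [FBox p0 a]) -> provable G (D ++ [FBox p1 a]) ->
    provable G (FBox (PCup p0 p1) a :: D)
| R_StarL : forall G D p a,
    provable (a :: FBox p (FBox (PStar p) a) :: G) D ->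
    provable (FBox (PStar p) a :: G) D
| R_StarR : forall G p a,
    provable (a :: G) [FBox p a] ->
    provable (a :: box (PStar p) G) [FBox (PStar p) a]
| R_TestL : forall G D a b,
    provable G (a :: D) -> provable (b :: G) D ->
    provable (FBox (PTest a) b :: G) D
| R_TestR : forall G D a b,
    provable (a :: G) (b :: D) -> provable G (FBox (PTest a) b :: D).

End TPDL.

(* Main.v *)
Require Import Defs.
From Stdlib Require Import List Relations Classical ProofIrrelevance Lia.
Import ListNotations.
Set Implicit Arguments.

Ltac incl_tac := let x := fresh "x" in
  unfold incl_l; intros x; simpl; repeat rewrite in_app_iff; simpl;
  intuition (subst; auto).



Section Prop1.
Variables Prp AtProg : Type.
Notation F := (form Prp AtProg).
Notation P := (prog Prp AtProg).
Notation Bot := (FBot Prp AtProg).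
Notation pv := (@provable Prp AtProg).
Definition Neg (a : F) := FImp a Bot.

Lemma wk G D G' D' : pv G D -> incl_l G G' -> incl_l D D' -> pv G' D'.
Proof. exact (@R_Wk _ _ G D G' D'). Qed.

Ltac wk H := eapply wk; [exact H | incl_tac | incl_tac].

Lemma ax G D a : In a G -> In a D -> pv G D.
Proof. intros; eapply R_Ax; eauto. Qed.
Lemma cut a G D : pv G (a :: D) -> pv (a :: G) D -> pv G D.
Proof. intros; eapply R_Cut; eauto. Qed.
Arguments cut a {G D}.
Arguments ax {G D} a.

Lemma impR_inv G D a b : pv G (FImp a b :: D) -> pv (a :: G) (b :: D).
Proof.
  intro H. apply (cut (FImp a b)).
  - wk H.
  - apply R_ImpL. + apply (ax a); simpl; auto. + apply (ax b); simpl; auto.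
Qed.

Lemma negL G D a : pv G (a :: D) -> pv (Neg a :: G) D.
Proof. intro H. apply R_ImpL; [exact H | apply R_Bot]. Qed.

Lemma negR G D a : pv (a :: G) D -> pv G (Neg a :: D).
Proof. intro H. apply R_ImpR. wk H. Qed.

Lemma negR_inv G D a : pv G (Neg a :: D) -> pv (a :: G) D.
Proof. intro H. apply impR_inv in H. apply (cut Bot).
  - wk H. - apply R_Bot. Qed.

Lemma negL_inv G D a : pv (Neg a :: G) D -> pv G (a :: D).
Proof. intro H. apply (cut (Neg a)).
  - apply negR. apply (ax a); simpl; auto.
  - wk H. Qed.

Lemma cut_list L G D : (forall x, In x L -> pv G (x :: D)) -> pv (L ++ G) D -> pv G D.
Proof.
  revert G D; induction L as [|a L IH]; intros G D HL H; simpl in *; auto.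
  apply (cut a). apply HL; auto.
  apply IH. intros x Hx. specialize (HL x (or_intror Hx)). wk HL.
  wk H.
Qed.

Lemma cut2 G D a : pv G (a :: D) -> pv [a] [] -> pv G D.
Proof. intros H1 H2. apply (cut a); auto. wk H2. Qed.

Fixpoint imps (l : list F) (x : F) : F :=
  match l with [] => x | a :: l => FImp a (imps l x) end.
Fixpoint disj (l : list F) : F :=
  match l with [] => Bot | a :: l => FImp (Neg a) (disj l) end.

Lemma imps_R l x G D : pv (l ++ G) (x :: D) -> pv G (imps l x :: D).
Proof.
  revert G; induction l as [|a l IH]; intros G H; simpl in *; auto.
  apply R_ImpR. apply IH. wk H.
Qed.

Lemma imps_R_inv l x G D : pv G (imps l x :: D) -> pv (l ++ G) (x :: D).
Proof.
  revert G; induction l as [|a l IH]; intros G H; simpl in *; auto.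
  apply impR_inv in H. apply IH in H. wk H.
Qed.

Lemma disj_R l G D : pv G (l ++ D) -> pv G (disj l :: D).
Proof.
  revert G; induction l as [|a l IH]; intros G H; simpl in *.
  - wk H.
  - apply R_ImpR. apply IH. apply negL. wk H.
Qed.

Lemma disj_L l G D : (forall x, In x l -> pv (x :: G) D) -> pv (disj l :: G) D.
Proof.
  revert G; induction l as [|a l IH]; intros G H; simpl in *.
  - apply R_Bot.
  - apply R_ImpL. + apply negR. apply H; auto. + apply IH; auto.
Qed.

Lemma disj_R_inv l G D : pv G (disj l :: D) -> pv G (l ++ D).
Proof.
  intro H. apply (cut (disj l)). wk H.
  apply disj_L. intros x Hx. apply (ax x); simpl; rewrite ?in_app_iff; auto.
Qed.


Lemma rtrans G D x y : pv G (x :: D) -> pv [x] [y] -> pv G (y :: D).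
Proof. intros H1 H2. apply (cut x). wk H1. wk H2. Qed.

Lemma ltrans G D x y : pv (y :: G) D -> pv [x] [y] -> pv (x :: G) D.
Proof. intros H1 H2. apply (cut y). wk H2. wk H1. Qed.

Lemma box_mono p a b : pv [a] [b] -> pv [FBox p a] [FBox p b].
Proof. intro H. apply (@R_Box _ _ [a] [] p b). exact H. Qed.

Lemma box_list p L y : pv L [y] -> pv (map (FBox p) L) [FBox p y].
Proof. intro H. apply (@R_Box _ _ L [] p y). exact H. Qed.

Lemma adj1 p X Y : pv [] [X; FBoxC p Y] -> pv [] [FBox p X; Y].
Proof. intro H. apply (@R_Box _ _ [] [Y] p X). exact H. Qed.

Lemma adj2 p X Y : pv [] [Y; FBox p X] -> pv [] [FBoxC p Y; X].
Proof. intro H. apply (@R_BoxC _ _ [] [X] p Y). exact H. Qed.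

Lemma base p a : pv [] [FBox p (Neg (FBoxC p a)); a].
Proof. apply adj1. apply negR. apply (ax (FBoxC p a)); simpl; auto. Qed.

Lemma seqL1 p q a : pv [FBox (PSeq p q) a] [FBox p (FBox q a)].
Proof. apply R_SeqL. apply (ax (FBox p (FBox q a))); simpl; auto. Qed.
Lemma cupL1 p q a : pv [FBox (PCup p q) a] [FBox p a].
Proof. apply R_CupL. apply (ax (FBox p a)); simpl; auto. Qed.
Lemma cupL2 p q a : pv [FBox (PCup p q) a] [FBox q a].
Proof. apply R_CupL. apply (ax (FBox q a)); simpl; auto. Qed.
Lemma starL1 p a : pv [FBox (PStar p) a] [a].
Proof. apply R_StarL. apply (ax a); simpl; auto. Qed.
Lemma starL2 p a : pv [FBox (PStar p) a] [FBox p (FBox (PStar p) a)].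
Proof. apply R_StarL. apply (ax (FBox p (FBox (PStar p) a))); simpl; auto. Qed.
Lemma testL1 b a : pv [FBox (PTest b) a; b] [a].
Proof. apply R_TestL. apply (ax b); simpl; auto. apply (ax a); simpl; auto. Qed.

Lemma neg_seq x y : pv [] [Neg x; y] -> pv [x] [y].
Proof. intro H. apply negR_inv in H. exact H. Qed.

Lemma cseq p q a : pv [FBoxC (PSeq p q) a] [FBoxC q (FBoxC p a)].
Proof.
  set (x := FBoxC (PSeq p q) a). apply neg_seq.
  assert (H : pv [] [FBoxC q (FBoxC p a); Neg x]).
  { apply adj2. assert (H1 : pv [] [FBoxC p a; FBox q (Neg x)]).
    { apply adj2. pose proof (base (PSeq p q) a) as B.
      pose proof (rtrans B (seqL1 p q (Neg x))) as B2. wk B2. }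
    exact H1. }
  wk H.
Qed.

Lemma ccup1 p q a : pv [FBoxC (PCup p q) a] [FBoxC p a].
Proof.
  set (x := FBoxC (PCup p q) a). apply neg_seq.
  assert (H : pv [] [FBoxC p a; Neg x]).
  { apply adj2. pose proof (rtrans (base (PCup p q) a) (cupL1 p q (Neg x))) as B2. wk B2. }
  wk H.
Qed.
Lemma ccup2 p q a : pv [FBoxC (PCup p q) a] [FBoxC q a].
Proof.
  set (x := FBoxC (PCup p q) a). apply neg_seq.
  assert (H : pv [] [FBoxC q a; Neg x]).
  { apply adj2. pose proof (rtrans (base (PCup p q) a) (cupL2 p q (Neg x))) as B2. wk B2. }
  wk H.
Qed.
Lemma ctest b a : pv [FBoxC (PTest b) a; b] [a].
Proof.
  set (x := FBoxC (PTest b) a). apply negR_inv.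
  apply (cut (FBox (PTest b) (Neg x))).
  - pose proof (base (PTest b) a) as B. wk B.
  - apply R_TestL. apply (ax b); simpl; auto. apply (ax (Neg x)); simpl; auto.
Qed.
Lemma cstar1 p a : pv [FBoxC (PStar p) a] [a].
Proof.
  set (x := FBoxC (PStar p) a). apply neg_seq.
  exact (rtrans (base (PStar p) a) (starL1 p (Neg x))).
Qed.
Lemma star_ind p a : pv [a] [FBox p a] -> pv [a] [FBox (PStar p) a].
Proof. intro H. exact (@R_StarR _ _ [] p a H). Qed.
Lemma chain x y z : pv [x] [y] -> pv [y] [z] -> pv [x] [z].
Proof. intros H1 H2. apply (rtrans (y:=z) (x:=y)); auto. Qed.
Lemma cstar2 p a : pv [FBoxC (PStar p) a] [FBoxC p (FBoxC (PStar p) a)].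
Proof.
  set (x := FBoxC (PStar p) a). set (N := Neg x). apply neg_seq.
  set (I := FBox (PStar p) N).
  assert (HI1 : pv [I] [FBox p I]) by apply starL2.
  assert (HI2 : pv [I] [FBox (PStar p) I]) by (apply star_ind; exact HI1).
  assert (HI3 : pv [I] [FBox p N]) by (apply (chain HI1); apply box_mono; apply starL1).
  assert (HI4 : pv [I] [FBox (PStar p) (FBox p N)]) by (apply (chain HI2); apply box_mono; exact HI3).
  assert (H1 : pv [] [a; FBox (PStar p) (FBox p N)]).
  { pose proof (rtrans (base (PStar p) a) HI4) as B. wk B. }
  apply adj2 in H1.
  assert (H2 : pv [] [x; FBox p N]) by wk H1.
  apply adj2 in H2. wk H2.
Qed.
End Prop1.
Ltac wk H := eapply wk; [exact H | incl_tac | incl_tac].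
Arguments cut {Prp AtProg} a {G D}.
Arguments ax {Prp AtProg} {G D} a.


Scheme form_mind := Induction for form Sort Prop
  with prog_mind := Induction for prog Sort Prop.
Combined Scheme form_prog_mind from form_mind, prog_mind.

Section Clos.
Variables Prp AtProg : Type.
Notation F := (form Prp AtProg).
Notation P := (prog Prp AtProg).

Definition comps (x : F) : list F :=
  match x with
  | FImp a b => [a; b]
  | FBox p a =>
    match p with
    | PAt _ _ => [a]
    | PSeq p1 p2 => [FBox p1 (FBox p2 a)]
    | PCup p1 p2 => [FBox p1 a; FBox p2 a]
    | PStar p1 => [a; FBox p1 (FBox p a)]
    | PTest b => [b; a]
    end
  | FBoxC p a =>
    match p with
    | PAt _ _ => [a]
    | PSeq p1 p2 => [FBoxC p2 (FBoxC p1 a)]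
    | PCup p1 p2 => [FBoxC p1 a; FBoxC p2 a]
    | PStar p1 => [a; FBoxC p1 (FBoxC p a)]
    | PTest b => [b; a]
    end
  | _ => []
  end.

Fixpoint fl (f : F) : list F :=
  match f with
  | FImp a b => f :: fl a ++ fl b
  | FBox p a => flb p a ++ fl a
  | FBoxC p a => flc p a ++ fl a
  | _ => [f]
  end
with flb (p : P) (a : F) : list F :=
  match p with
  | PAt _ _ => [FBox p a]
  | PSeq p1 p2 => FBox p a :: flb p1 (FBox p2 a) ++ flb p2 a
  | PCup p1 p2 => FBox p a :: flb p1 a ++ flb p2 a
  | PStar p1 => FBox p a :: flb p1 (FBox p a)
  | PTest b => FBox p a :: fl b
  end
with flc (p : P) (a : F) : list F :=
  match p with
  | PAt _ _ => [FBoxC p a]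
  | PSeq p1 p2 => FBoxC p a :: flc p2 (FBoxC p1 a) ++ flc p1 a
  | PCup p1 p2 => FBoxC p a :: flc p1 a ++ flc p2 a
  | PStar p1 => FBoxC p a :: flc p1 (FBoxC p a)
  | PTest b => FBoxC p a :: fl b
  end.

Lemma flb_head p a : In (FBox p a) (flb p a).
Proof. destruct p; simpl; auto. Qed.
Lemma flc_head p a : In (FBoxC p a) (flc p a).
Proof. destruct p; simpl; auto. Qed.
Lemma fl_head f : In f (fl f).
Proof. destruct f; simpl; auto; apply in_or_app; left; auto using flb_head, flc_head. Qed.

Definition closedC (C : list F) := forall x, In x C -> forall y, In y (comps x) -> In y C.

Ltac ina := simpl in *; repeat (rewrite in_app_iff in *; simpl in * ).

Lemma fl_closed_all :
  (forall f, closedC (fl f)) /\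
  (forall p, forall a, (forall x, In x (flb p a) -> forall y, In y (comps x) -> In y (flb p a ++ fl a))
                    /\ (forall x, In x (flc p a) -> forall y, In y (comps x) -> In y (flc p a ++ fl a))).
Proof.
  apply (form_prog_mind
    (fun f => closedC (fl f))
    (fun p => forall a, (forall x, In x (flb p a) -> forall y, In y (comps x) -> In y (flb p a ++ fl a))
                    /\ (forall x, In x (flc p a) -> forall y, In y (comps x) -> In y (flc p a ++ fl a)))).
  - intros x Hx y Hy. simpl in *. destruct Hx as [<-|[]]. simpl in Hy. destruct Hy.
  - intros pp x Hx y Hy. simpl in *. destruct Hx as [<-|[]]. simpl in Hy. destruct Hy.
  - intros a IHa b IHb x Hx y Hy. simpl in *. ina.
    destruct Hx as [<-|[Hx|Hx]].
    + simpl in Hy. destruct Hy as [<-|[<-|[]]]; ina; auto using fl_head.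
    + specialize (IHa x Hx y Hy); auto.
    + specialize (IHb x Hx y Hy); auto.
  - intros p IHp a IHa x Hx y Hy. simpl in *. ina. destruct (IHp a) as [H1 _].
    destruct Hx as [Hx|Hx].
    + specialize (H1 x Hx y Hy). ina. tauto.
    + specialize (IHa x Hx y Hy). auto.
  - intros p IHp a IHa x Hx y Hy. simpl in *. ina. destruct (IHp a) as [_ H1].
    destruct Hx as [Hx|Hx].
    + specialize (H1 x Hx y Hy). ina. tauto.
    + specialize (IHa x Hx y Hy). auto.
  - intros al a. split; intros x Hx y Hy; simpl in *; destruct Hx as [<-|[]]; simpl in Hy;
      destruct Hy as [<-|[]]; ina; auto using fl_head.
  - intros p1 IH1 p2 IH2 a. split; intros x Hx y Hy; simpl in *.
    + destruct Hx as [<-|Hx].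
      * simpl in Hy. destruct Hy as [<-|[]]. right. ina. left. left. apply flb_head.
      * ina. destruct Hx as [Hx|Hx].
        -- destruct (IH1 (FBox p2 a)) as [H1 _]. specialize (H1 x Hx y Hy). ina. tauto.
        -- destruct (IH2 a) as [H1 _]. specialize (H1 x Hx y Hy). ina. tauto.
    + destruct Hx as [<-|Hx].
      * simpl in Hy. destruct Hy as [<-|[]]. right. ina. left. left. apply flc_head.
      * ina. destruct Hx as [Hx|Hx].
        -- destruct (IH2 (FBoxC p1 a)) as [_ H1]. specialize (H1 x Hx y Hy). ina. tauto.
        -- destruct (IH1 a) as [_ H1]. specialize (H1 x Hx y Hy). ina. tauto.
  - intros p1 IH1 p2 IH2 a. split; intros x Hx y Hy; simpl in *.
    + destruct Hx as [<-|Hx].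
      * simpl in Hy. ina. destruct Hy as [<-|[<-|[]]]; ina; auto using flb_head.
      * ina. destruct Hx as [Hx|Hx].
        -- destruct (IH1 a) as [H1 _]. specialize (H1 x Hx y Hy). ina. tauto.
        -- destruct (IH2 a) as [H1 _]. specialize (H1 x Hx y Hy). ina. tauto.
    + destruct Hx as [<-|Hx].
      * simpl in Hy. ina. destruct Hy as [<-|[<-|[]]]; ina; auto using flc_head.
      * ina. destruct Hx as [Hx|Hx].
        -- destruct (IH1 a) as [_ H1]. specialize (H1 x Hx y Hy). ina. tauto.
        -- destruct (IH2 a) as [_ H1]. specialize (H1 x Hx y Hy). ina. tauto.
  - intros p1 IH1 a. split; intros x Hx y Hy; simpl in *.
    + destruct Hx as [<-|Hx].
      * simpl in Hy. ina. destruct Hy as [<-|[<-|[]]]; ina; auto using flb_head, fl_head.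
      * destruct (IH1 (FBox (PStar p1) a)) as [H1 _]. specialize (H1 x Hx y Hy). ina. tauto.
    + destruct Hx as [<-|Hx].
      * simpl in Hy. ina. destruct Hy as [<-|[<-|[]]]; ina; auto using flc_head, fl_head.
      * destruct (IH1 (FBoxC (PStar p1) a)) as [_ H1]. specialize (H1 x Hx y Hy). ina. tauto.
  - intros b IHb a. split; intros x Hx y Hy; simpl in *.
    + destruct Hx as [<-|Hx].
      * simpl in Hy. ina. destruct Hy as [<-|[<-|[]]]; ina; auto using fl_head.
      * specialize (IHb x Hx y Hy). ina. tauto.
    + destruct Hx as [<-|Hx].
      * simpl in Hy. ina. destruct Hy as [<-|[<-|[]]]; ina; auto using fl_head.
      * specialize (IHb x Hx y Hy). ina. tauto.
Qed.

Definition closure (l : list F) : list F := flat_map fl l.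

Lemma closure_closed l : closedC (closure l).
Proof.
  intros x Hx y Hy. unfold closure in *. apply in_flat_map in Hx. destruct Hx as [f [Hf Hx]].
  apply in_flat_map. exists f. split; auto. exact (proj1 fl_closed_all f x Hx y Hy).
Qed.

Lemma closure_incl l f : In f l -> In f (closure l).
Proof. intro H. apply in_flat_map. exists f. split; auto using fl_head. Qed.

End Clos.



Section Atoms.
Variables Prp AtProg : Type.
Notation F := (form Prp AtProg).
Notation P := (prog Prp AtProg).
Notation Bot := (FBot Prp AtProg).
Notation pv := (@provable Prp AtProg).

Fixpoint sel (C : list F) (bs : list bool) : list F :=
  match C, bs with
  | x :: C', true :: bs' => x :: sel C' bs'
  | x :: C', false :: bs' => sel C' bs'
  | _, _ => []
  end.
Fixpoint cmp (C : list F) (bs : list bool) : list F :=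
  match C, bs with
  | x :: C', false :: bs' => x :: cmp C' bs'
  | x :: C', true :: bs' => cmp C' bs'
  | _, _ => []
  end.

Lemma sel_in C bs y : In y (sel C bs) -> In y C.
Proof. revert bs; induction C as [|x C IH]; intros [|[|] bs] H; simpl in *; try tauto.
  destruct H; auto. right; eauto. right; eauto. Qed.
Lemma cmp_in C bs y : In y (cmp C bs) -> In y C.
Proof. revert bs; induction C as [|x C IH]; intros [|[|] bs] H; simpl in *; try tauto.
  right; eauto. destruct H; auto. right; eauto. Qed.

Lemma part C bs y : length bs = length C -> In y C -> In y (sel C bs) \/ In y (cmp C bs).
Proof. revert bs; induction C as [|x C IH]; intros [|[|] bs] Hl H; simpl in *; try tauto; try discriminate.
  - destruct H as [<-|H]; auto. destruct (IH bs); auto.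
  - destruct H as [<-|H]; auto. destruct (IH bs); auto. Qed.

Lemma differ C b1 b2 : length b1 = length C -> length b2 = length C -> b1 <> b2 ->
  exists y, (In y (sel C b1) /\ In y (cmp C b2)) \/ (In y (cmp C b1) /\ In y (sel C b2)).
Proof.
  revert b1 b2; induction C as [|x C IH]; intros [|c1 b1] [|c2 b2] H1 H2 Hne; simpl in *;
    try discriminate.
  - congruence.
  - injection H1; injection H2; intros. destruct c1, c2.
    + destruct (IH b1 b2) as [y Hy]; auto. congruence. exists y; simpl; tauto.
    + exists x; simpl; auto.
    + exists x; simpl; auto.
    + destruct (IH b1 b2) as [y Hy]; auto. congruence. exists y; simpl; tauto.
Qed.

Lemma lindenbaum C G D : ~ pv G D -> exists bs, length bs = length C /\
   ~ pv (sel C bs ++ G) (cmp C bs ++ D).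
Proof.
  revert G D; induction C as [|x C IH]; intros G D H.
  - exists []; simpl; auto.
  - destruct (classic (pv (x :: G) D)) as [H1|H1].
    + destruct (classic (pv G (x :: D))) as [H2|H2].
      * exfalso; apply H; apply (cut x); auto.
      * destruct (IH _ _ H2) as [bs [Hl Hb]]. exists (false :: bs); simpl; split; auto.
        intro Hc; apply Hb; wk Hc.
    + destruct (IH _ _ H1) as [bs [Hl Hb]]. exists (true :: bs); simpl; split; auto.
      intro Hc; apply Hb; wk Hc.
Qed.

Fixpoint all_bs (n : nat) : list (list bool) :=
  match n with 0 => [[]] | S n => map (cons true) (all_bs n) ++ map (cons false) (all_bs n) end.
Lemma all_bs_in bs : In bs (all_bs (length bs)).
Proof. induction bs as [|[|] bs IH]; simpl; auto; apply in_or_app; [left|right]; apply in_map; auto. Qed.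

Lemma filter_ex (X : Type) (L : list X) (Q : X -> Prop) : exists S, forall x, In x S <-> In x L /\ Q x.
Proof.
  induction L as [|a L [S HS]].
  - exists []; simpl; tauto.
  - destruct (classic (Q a)).
    + exists (a :: S); intro x; simpl; rewrite HS; intuition (subst; auto).
    + exists S; intro x; simpl; rewrite HS; intuition (subst; auto); tauto.
Qed.

Variable C : list F.
Definition isAtom (bs : list bool) := length bs = length C /\ ~ pv (sel C bs) (cmp C bs).
Definition nb (bs : list bool) : F := imps (sel C bs) (disj (cmp C bs)).

Lemma nb_R bs G D : pv (sel C bs ++ G) (cmp C bs ++ D) -> pv G (nb bs :: D).
Proof. intro H. apply imps_R. apply disj_R. exact H. Qed.
Lemma nb_R_inv bs G D : pv G (nb bs :: D) -> pv (sel C bs ++ G) (cmp C bs ++ D).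
Proof. intro H. apply imps_R_inv in H. apply disj_R_inv in H. exact H. Qed.
Lemma nb_L bs G D : pv (nb bs :: sel C bs ++ G) (cmp C bs ++ D).
Proof.
  assert (H : pv [nb bs] [nb bs]) by (apply (ax (nb bs)); simpl; auto).
  apply nb_R_inv in H. wk H.
Qed.

Lemma lind_contra G D : (forall bs, isAtom bs -> pv (sel C bs ++ G) (cmp C bs ++ D)) -> pv G D.
Proof.
  intro H. apply NNPP. intro Hn. destruct (lindenbaum C Hn) as [bs [Hl Hb]].
  apply Hb. apply H. split; auto. intro Hc; apply Hb; wk Hc.
Qed.

Section OneAtom.
Variable bs : list bool.
Hypothesis Hbs : isAtom bs.
Lemma at_notboth y : In y (sel C bs) -> In y (cmp C bs) -> False.
Proof. intros H1 H2. apply (proj2 Hbs). apply (ax y); auto. Qed.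
Lemma at_part y : In y C -> In y (sel C bs) \/ In y (cmp C bs).
Proof. apply part. apply Hbs. Qed.
Lemma at_cmp y : In y C -> ~ In y (sel C bs) -> In y (cmp C bs).
Proof. intros H1 H2. destruct (at_part y H1); tauto. Qed.
Lemma at_selR y : In y C -> pv (sel C bs) (y :: cmp C bs) -> In y (sel C bs).
Proof. intros H1 H2. destruct (at_part y H1) as [H|H]; auto. exfalso. apply (proj2 Hbs). wk H2. Qed.
Lemma at_cmpL y : In y C -> pv (y :: sel C bs) (cmp C bs) -> In y (cmp C bs).
Proof. intros H1 H2. destruct (at_part y H1) as [H|H]; auto. exfalso. apply (proj2 Hbs). wk H2. Qed.
End OneAtom.

Lemma atoms_differ b1 b2 G D : isAtom b1 -> isAtom b2 -> b1 <> b2 ->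
  pv (sel C b1 ++ sel C b2 ++ G) (cmp C b1 ++ cmp C b2 ++ D).
Proof.
  intros [H1 _] [H2 _] Hne. destruct (differ C H1 H2 Hne) as [y [[Ha Hb]|[Ha Hb]]];
  apply (ax y); rewrite !in_app_iff; auto.
Qed.

End Atoms.



Section Main.
Variables Prp AtProg : Type.
Notation F := (form Prp AtProg).
Notation P := (prog Prp AtProg).
Notation Bot := (FBot Prp AtProg).
Notation pv := (@provable Prp AtProg).

Fixpoint tin (psi : F) (p : P) : Prop :=
  match p with
  | PAt _ _ => False
  | PSeq a b => tin psi a \/ tin psi b
  | PCup a b => tin psi a \/ tin psi b
  | PStar a => tin psi a
  | PTest b => psi = b
  end.

Fixpoint fsize (f : F) : nat :=
  match f with
  | FImp a b => S (fsize a + fsize b)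
  | FBox p a => S (psize p + fsize a)
  | FBoxC p a => S (psize p + fsize a)
  | _ => 1
  end
with psize (p : P) : nat :=
  match p with
  | PAt _ _ => 1
  | PSeq a b => S (psize a + psize b)
  | PCup a b => S (psize a + psize b)
  | PStar a => S (psize a)
  | PTest b => S (fsize b)
  end.

Lemma tin_size psi p : tin psi p -> fsize psi < psize p.
Proof. induction p; simpl; intros; try tauto; try (destruct H; [apply IHp1 in H|apply IHp2 in H]; lia).
  apply IHp in H; lia. subst; lia. Qed.

Variable C : list F.
Hypothesis HC : closedC C.

Lemma box_arg p : forall a, In (FBox p a) C -> In a C.
Proof.
  induction p; intros x0 H; pose proof (HC _ H) as Hc; simpl in Hc.
  - apply Hc; auto.
  - apply IHp2, IHp1, Hc; auto.
  - apply IHp1, Hc; auto.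
  - apply Hc; auto.
  - apply Hc; auto.
Qed.
Lemma boxc_arg p : forall a, In (FBoxC p a) C -> In a C.
Proof.
  induction p; intros x0 H; pose proof (HC _ H) as Hc; simpl in Hc.
  - apply Hc; auto.
  - apply IHp1, IHp2, Hc; auto.
  - apply IHp1, Hc; auto.
  - apply Hc; auto.
  - apply Hc; auto.
Qed.
Lemma box_tin p : forall a psi, In (FBox p a) C -> tin psi p -> In psi C.
Proof.
  induction p; intros x0 psi H Ht; pose proof (HC _ H) as Hc; simpl in Hc, Ht; try tauto.
  - destruct Ht as [Ht|Ht]. eapply IHp1; eauto. apply IHp2 with x0; auto.
    apply box_arg with p1. apply Hc; auto.
  - destruct Ht as [Ht|Ht]. eapply IHp1; eauto. eapply IHp2; eauto.
  - eapply IHp; eauto 7.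
  - subst; apply Hc; simpl; auto.
Qed.
Lemma boxc_tin p : forall a psi, In (FBoxC p a) C -> tin psi p -> In psi C.
Proof.
  induction p; intros x0 psi H Ht; pose proof (HC _ H) as Hc; simpl in Hc, Ht; try tauto.
  - destruct Ht as [Ht|Ht]. apply IHp1 with x0; auto.
    apply boxc_arg with p2. apply Hc; auto. eapply IHp2; eauto.
  - destruct Ht as [Ht|Ht]. eapply IHp1; eauto. eapply IHp2; eauto.
  - eapply IHp; eauto 7.
  - subst; apply Hc; simpl; auto.
Qed.


Variable w0 : list bool.
Hypothesis Hw0 : isAtom C w0.

Definition W := {bs : list bool | isAtom C bs}.
Definition sl (w : W) := sel C (proj1_sig w).
Definition cm (w : W) := cmp C (proj1_sig w).
Definition nbw (w : W) := nb C (proj1_sig w).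
Definition Con (w : W) (p : P) (v : W) := ~ pv (sl w) (FBox p (nbw v) :: cm w).

Definition M : model Prp AtProg :=
  @Model Prp AtProg W (inhabits (exist _ w0 Hw0))
    (fun al w v => Con w (PAt Prp al) v)
    (fun w p => In (FVar AtProg p) (sl w)).

Lemma sl_C (w : W) y : In y (sl w) -> In y C.
Proof. apply sel_in. Qed.
Lemma wsel (w : W) y : In y C -> pv (sl w) (y :: cm w) -> In y (sl w).
Proof. intros. apply (at_selR (proj2_sig w)); auto. Qed.
Lemma wcmp (w : W) y : In y C -> ~ In y (sl w) -> In y (cm w).
Proof. intros. apply (at_cmp (proj2_sig w)); auto. Qed.
Lemma wnb (w : W) y : In y (sl w) -> In y (cm w) -> False.
Proof. intros. eapply (at_notboth (proj2_sig w)); eauto. Qed.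
Lemma wcons (w : W) : ~ pv (sl w) (cm w).
Proof. apply (proj2 (proj2_sig w)). Qed.

Lemma from_mem G D x y : In x G -> pv [x] [y] -> pv G (y :: D).
Proof. intros H1 H2. apply (cut x). apply (ax x); simpl; auto. wk H2. Qed.
Lemma from_mem2 G D x1 x2 y : In x1 G -> In x2 G -> pv [x1; x2] [y] -> pv G (y :: D).
Proof. intros H1 H2 H3. apply (cut x1). apply (ax x1); simpl; auto.
  apply (cut x2). apply (ax x2); simpl; auto. wk H3. Qed.

Lemma step (w : W) x y : In x (sl w) -> pv [x] [y] -> In y C -> In y (sl w).
Proof. intros H1 H2 H3. apply wsel; auto. apply from_mem with x; auto. Qed.

Definition TH (p : P) := forall psi, tin psi p -> In psi C /\ forall w : W, sat M w psi <-> In psi (sl w).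

Lemma box_down p : TH p -> forall a (w v : W), In (FBox p a) (sl w) -> rel M p w v -> In a (sl v).
Proof.
  induction p as [al|p1 IH1 p2 IH2|p1 IH1 p2 IH2|p1 IH1|b]; intros HT a w v Hin Hr; simpl in Hr.
  - assert (Ha : In a C) by (apply box_arg with (PAt Prp al); eapply sl_C; eauto).
    apply NNPP; intro Hn. apply Hr. apply from_mem with (FBox (PAt Prp al) a); auto.
    apply box_mono. apply nb_R. apply (ax a); rewrite ?in_app_iff; simpl; auto.
    left. apply wcmp; auto.
  - destruct Hr as [u [Hr1 Hr2]].
    assert (HC1 : In (FBox p1 (FBox p2 a)) C) by (apply (HC _ (sl_C _ _ Hin)); simpl; auto).
    apply (IH2 (fun psi H => HT psi (or_intror H)) a u v); auto.
    apply (IH1 (fun psi H => HT psi (or_introl H)) _ w u); auto.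
    apply step with (FBox (PSeq p1 p2) a); auto using seqL1.
  - destruct Hr as [Hr|Hr].
    + apply (IH1 (fun psi H => HT psi (or_introl H)) a w v); auto.
      apply step with (FBox (PCup p1 p2) a); auto using cupL1.
      apply (HC _ (sl_C _ _ Hin)); simpl; auto.
    + apply (IH2 (fun psi H => HT psi (or_intror H)) a w v); auto.
      apply step with (FBox (PCup p1 p2) a); auto using cupL2.
      apply (HC _ (sl_C _ _ Hin)); simpl; auto.
  - assert (Hs : In (FBox (PStar p1) a) (sl v)).
    { clear - Hr Hin IH1 HT HC. induction Hr as [x y Hxy| x | x y z _ IHa _ IHb]; auto.
      apply (IH1 HT _ x y); auto. apply step with (FBox (PStar p1) a); auto using starL2.
      apply (HC _ (sl_C _ _ Hin)); simpl; auto. }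
    apply step with (FBox (PStar p1) a); auto using starL1.
    apply (HC _ (sl_C _ _ Hs)); simpl; auto.
  - destruct Hr as [<- Hb]. destruct (HT b eq_refl) as [HbC Hbt].
    apply Hbt in Hb. apply wsel. apply (HC _ (sl_C _ _ Hin)); simpl; auto.
    apply from_mem2 with (FBox (PTest b) a) b; auto using testL1.
Qed.


Lemma boxc_down p : TH p -> forall a (w v : W), In (FBoxC p a) (sl v) -> rel M p w v -> In a (sl w).
Proof.
  induction p as [al|p1 IH1 p2 IH2|p1 IH1 p2 IH2|p1 IH1|b]; intros HT a w v Hin Hr; simpl in Hr.
  - assert (Ha : In a C) by (apply boxc_arg with (PAt Prp al); eapply sl_C; eauto).
    apply NNPP; intro Hn. apply Hr.
    assert (H1 : pv [] [FBox (PAt Prp al) (nbw v); a]).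
    { apply adj1. apply nb_R. apply (ax (FBoxC (PAt Prp al) a)); rewrite ?in_app_iff; simpl; auto. }
    eapply wk; [exact H1| incl_tac | ]. intros x Hx; simpl in Hx. destruct Hx as [<-|[<-|[]]].
    left; auto. right. apply wcmp; auto.
  - destruct Hr as [u [Hr1 Hr2]].
    apply (IH1 (fun psi H => HT psi (or_introl H)) a w u); auto.
    apply (IH2 (fun psi H => HT psi (or_intror H)) _ u v); auto.
    apply step with (FBoxC (PSeq p1 p2) a); auto using cseq.
    apply (HC _ (sl_C _ _ Hin)); simpl; auto.
  - destruct Hr as [Hr|Hr].
    + apply (IH1 (fun psi H => HT psi (or_introl H)) a w v); auto.
      apply step with (FBoxC (PCup p1 p2) a); auto using ccup1.
      apply (HC _ (sl_C _ _ Hin)); simpl; auto.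
    + apply (IH2 (fun psi H => HT psi (or_intror H)) a w v); auto.
      apply step with (FBoxC (PCup p1 p2) a); auto using ccup2.
      apply (HC _ (sl_C _ _ Hin)); simpl; auto.
  - assert (Hs : In (FBoxC (PStar p1) a) (sl w)).
    { clear - Hr Hin IH1 HT HC. induction Hr as [x y Hxy| x | x y z _ IHa _ IHb]; auto.
      apply (IH1 HT _ x y); auto. apply step with (FBoxC (PStar p1) a); auto using cstar2.
      apply (HC _ (sl_C _ _ Hin)); simpl; auto. }
    apply step with (FBoxC (PStar p1) a); auto using cstar1.
    apply (HC _ (sl_C _ _ Hs)); simpl; auto.
  - destruct Hr as [-> Hb]. destruct (HT b eq_refl) as [HbC Hbt].
    apply Hbt in Hb. apply wsel. apply (HC _ (sl_C _ _ Hin)); simpl; auto.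
    apply from_mem2 with (FBoxC (PTest b) a) b; auto using ctest.
Qed.


Lemma W_eq (w v : W) : proj1_sig w = proj1_sig v -> w = v.
Proof. destruct w, v; simpl; intros ->; f_equal; apply proof_irrelevance. Qed.

Lemma W_len (w : W) : In (proj1_sig w) (all_bs (length C)).
Proof. rewrite <- (proj1 (proj2_sig w)). apply all_bs_in. Qed.

Lemma nb_in bs S D : In bs S -> pv (sel C bs ++ map (nb C) S) (cmp C bs ++ D).
Proof.
  intro H. eapply wk; [apply (nb_L C bs [] [])| |].
  - intros x Hx; simpl in Hx; rewrite !in_app_iff in *. destruct Hx as [<-|[Hx|[]]].
    right; apply in_map; auto. left; auto.
  - intros x Hx; rewrite !in_app_iff in *; simpl in Hx. destruct Hx as [Hx|[]]; auto.
Qed.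

Lemma existence p : TH p -> forall w v : W, Con w p v -> rel M p w v.
Proof.
  induction p as [al|p1 IH1 p2 IH2|p1 IH1 p2 IH2|p1 IH1|b]; intros HT w v Hc; simpl.
  - exact Hc.
  - assert (HT1 : TH p1) by (intros psi H; apply HT; simpl; auto).
    assert (HT2 : TH p2) by (intros psi H; apply HT; simpl; auto).
    apply NNPP; intro Hn.
    destruct (filter_ex (all_bs (length C))
      (fun bs => isAtom C bs /\ pv (sl w) (FBox p1 (nb C bs) :: cm w))) as [S HS].
    assert (H1 : pv (map (nb C) S) [FBox p2 (nbw v)]).
    { apply (lind_contra (C:=C)). intros bs Hbs.
      destruct (classic (pv (sl w) (FBox p1 (nb C bs) :: cm w))) as [Hp|Hp].
      - apply nb_in. apply HS. split; auto. rewrite <- (proj1 Hbs). apply all_bs_in.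
      - set (u := exist _ bs Hbs : W).
        assert (Hc1 : Con w p1 u) by exact Hp.
        assert (Hc2 : ~ Con u p2 v).
        { intro Hc2. apply Hn. exists u. split; auto. }
        apply NNPP in Hc2. unfold sl, cm in Hc2; simpl in Hc2. wk Hc2. }
    apply Hc. apply box_list with (p:=p1) in H1.
    apply cut_list with (L := map (FBox p1) (map (nb C) S)).
    + intros x Hx. apply in_map_iff in Hx. destruct Hx as [y [<- Hy]].
      apply in_map_iff in Hy. destruct Hy as [bs [<- Hbs]]. apply HS in Hbs.
      destruct Hbs as [_ [_ Hp]]. wk Hp.
    + apply R_SeqR. wk H1.
  - assert (HT1 : TH p1) by (intros psi H; apply HT; simpl; auto).
    assert (HT2 : TH p2) by (intros psi H; apply HT; simpl; auto).
    apply NNPP; intro Hn. apply Hc. apply R_CupR.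
    + apply NNPP; intro Hp. apply Hn. left. apply IH1; auto. intro Hq; apply Hp; wk Hq.
    + apply NNPP; intro Hp. apply Hn. right. apply IH2; auto. intro Hq; apply Hp; wk Hq.
  - apply NNPP; intro Hn.
    destruct (filter_ex (all_bs (length C))
      (fun bs => exists u : W, proj1_sig u = bs /\ clos_refl_trans W (fun x y => rel M p1 x y) w u))
      as [S HS].
    set (chi := fun bs => Neg (nb C bs)). set (d := disj (map chi S)).
    assert (HwS : In (proj1_sig w) S).
    { apply HS. split. apply W_len. exists w. split; auto. apply rt_refl. }
    assert (Hi : pv (sl w) (d :: cm w)).
    { apply disj_R. assert (H : pv (sl w) (chi (proj1_sig w) :: cm w)).
      { apply negR. pose proof (nb_L C (proj1_sig w) [] []) as H. wk H. }
      eapply wk; [exact H | incl_tac | ]. intros x Hx. simpl in Hx. rewrite in_app_iff.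
      destruct Hx as [<-|Hx]; auto. left. apply in_map; auto. }
    assert (Hii : pv [d] [nbw v]).
    { apply disj_L. intros x Hx. apply in_map_iff in Hx. destruct Hx as [bs [<- Hbs]].
      apply HS in Hbs. destruct Hbs as [_ [u [<- Hu]]]. unfold chi. apply negL.
      assert (Hne : proj1_sig v <> proj1_sig u).
      { intro E. apply W_eq in E. subst. auto. }
      pose proof (atoms_differ [] [] (proj2_sig v) (proj2_sig u) Hne) as Hd.
      assert (H : pv (sel C (proj1_sig u)) (nbw v :: cmp C (proj1_sig u))).
      { apply nb_R. wk Hd. }
      apply nb_R. wk H. }
    assert (Hiii : pv [d] [FBox p1 d]).
    { apply disj_L. intros x Hx. apply in_map_iff in Hx. destruct Hx as [bs [<- Hbs]].
      apply HS in Hbs. destruct Hbs as [_ [u [<- Hu]]]. unfold chi. apply negL. apply nb_R.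
      destruct (filter_ex (all_bs (length C))
        (fun bs => isAtom C bs /\ ~ exists u' : W, proj1_sig u' = bs /\
           clos_refl_trans W (fun x y => rel M p1 x y) w u')) as [Sc HSc].
      assert (H1 : pv (map (nb C) Sc) [d]).
      { apply (lind_contra (C:=C)). intros bs' Hbs'.
        destruct (classic (exists u' : W, proj1_sig u' = bs' /\
           clos_refl_trans W (fun x y => rel M p1 x y) w u')) as [Hq|Hq].
        - assert (HbS : In bs' S).
          { apply HS. split; auto. rewrite <- (proj1 Hbs'). apply all_bs_in. }
          assert (H : pv (sel C bs' ++ map (nb C) Sc) (chi bs' :: cmp C bs')).
          { apply negR. pose proof (nb_L C bs' (map (nb C) Sc) []) as H. wk H. }
          assert (H2 : pv (sel C bs' ++ map (nb C) Sc) (d :: cmp C bs')).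
          { apply disj_R. eapply wk; [exact H | incl_tac | ]. intros x Hx. simpl in Hx. rewrite !in_app_iff.
            destruct Hx as [<-|Hx]; auto. left. apply in_map; auto. }
          wk H2.
        - apply nb_in. apply HSc. split; [|split]; auto. rewrite <- (proj1 Hbs'). apply all_bs_in. }
      apply box_list with (p := p1) in H1.
      apply cut_list with (L := map (FBox p1) (map (nb C) Sc)).
      + intros x Hx. apply in_map_iff in Hx. destruct Hx as [y [<- Hy]].
        apply in_map_iff in Hy. destruct Hy as [bs' [<- Hbs']]. apply HSc in Hbs'.
        destruct Hbs' as [_ [Ha Hq]]. apply NNPP; intro Hnp.
        set (u' := exist _ bs' Ha : W).
        assert (Hc' : Con u p1 u').
        { intro Hc'. apply Hnp. unfold sl, cm, nbw in Hc'. simpl in Hc'. wk Hc'. }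
        apply Hq. exists u'. split; auto. apply rt_trans with u; auto. apply rt_step.
        apply IH1; auto.
      + wk H1. }
    pose proof (star_ind Hiii) as Hst.
    pose proof (chain Hst (box_mono (PStar p1) Hii)) as H4.
    apply Hc. exact (rtrans Hi H4).
  - destruct (HT b eq_refl) as [HbC Hbt].
    assert (Hb : In b (sl w)).
    { apply NNPP; intro Hn. apply Hc. apply R_TestR. apply (ax b); simpl; auto.
      right; apply wcmp; auto. }
    split.
    + apply W_eq. apply NNPP; intro Hne. apply Hc. apply R_TestR. apply nb_R.
      assert (Hne' : proj1_sig v <> proj1_sig w) by (intro E; apply Hne; auto).
      pose proof (atoms_differ [] [] (proj2_sig v) (proj2_sig w) Hne') as Hd.
      unfold sl, cm. wk Hd.
    + apply Hbt; auto.
Qed.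


Lemma truth n : forall a, fsize a < n -> In a C -> forall w : W, sat M w a <-> In a (sl w).
Proof.
  induction n as [|n IHn]; intros f Hs HfC w; [lia|].
  destruct f as [|pp|a b|p a|p a].
  - simpl. split; [tauto|]. intro H; exfalso; apply (wcons w).
    eapply wk; [apply (@R_Bot _ _ [] (cm w)) | | incl_tac].
    intros x Hx; simpl in Hx; destruct Hx as [<-|[]]; auto.
  - simpl. tauto.
  - assert (Ha : In a C) by (apply (HC _ HfC); simpl; auto).
    assert (Hb : In b C) by (apply (HC _ HfC); simpl; auto).
    simpl in Hs. simpl. rewrite (IHn a) by (auto; lia). rewrite (IHn b) by (auto; lia). split.
    + intro H. apply wsel; auto. apply R_ImpR. destruct (classic (In a (sl w))) as [Hi|Hi].
      * apply (ax b); simpl; auto.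
      * apply (ax a); simpl; [auto | right; apply wcmp; auto].
    + intros Himp Hain. apply wsel; auto. apply from_mem2 with (FImp a b) a; auto.
      apply R_ImpL. apply (ax a); simpl; auto. apply (ax b); simpl; auto.
  - simpl in Hs.
    assert (HT : TH p).
    { intros psi Ht. split. eapply box_tin; eauto. intro w'. apply IHn.
      apply tin_size in Ht; lia. eapply box_tin; eauto. }
    assert (Ha : In a C) by (eapply box_arg; eauto).
    simpl. split.
    + intro H. apply NNPP; intro Hn.
      assert (Hex : exists v : W, ~ In a (sl v) /\ Con w p v).
      { apply NNPP; intro Hne. apply Hn. apply wsel; auto.
        destruct (filter_ex (all_bs (length C)) (fun bs => isAtom C bs /\ ~ In a (sel C bs))) as [S HS].
        assert (H1 : pv (map (nb C) S) [a]).
        { apply (lind_contra (C:=C)). intros bs Hbs. destruct (classic (In a (sel C bs))).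
          - apply (ax a); rewrite !in_app_iff; simpl; auto.
          - apply nb_in. apply HS. split; auto. rewrite <- (proj1 Hbs). apply all_bs_in. }
        apply box_list with (p:=p) in H1.
        apply cut_list with (L := map (FBox p) (map (nb C) S)).
        + intros x Hx. apply in_map_iff in Hx. destruct Hx as [y [<- Hy]].
          apply in_map_iff in Hy. destruct Hy as [bs [<- Hbs]]. apply HS in Hbs.
          destruct Hbs as [_ [Hat Hna]]. apply NNPP; intro Hp. apply Hne.
          exists (exist _ bs Hat). split; auto. intro Hc; apply Hp.
          unfold sl, cm, nbw in Hc; simpl in Hc. wk Hc.
        + wk H1. }
      destruct Hex as [v [Hv Hc]]. apply Hv. apply (IHn a); auto. lia.
      apply H. apply existence; auto.
    + intros Hin v Hr. apply (IHn a); auto. lia. eapply box_down; eauto.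
  - simpl in Hs.
    assert (HT : TH p).
    { intros psi Ht. split. eapply boxc_tin; eauto. intro w'. apply IHn.
      apply tin_size in Ht; lia. eapply boxc_tin; eauto. }
    assert (Ha : In a C) by (eapply boxc_arg; eauto).
    simpl. split.
    + intro H. apply NNPP; intro Hn.
      assert (Hex : exists u : W, ~ In a (sl u) /\ Con u p w).
      { apply NNPP; intro Hne. apply Hn. apply wsel; auto.
        assert (H1 : pv [] [a; FBox p (nbw w)]).
        { apply (lind_contra (C:=C)). intros bs Hbs. destruct (classic (In a (sel C bs))).
          - apply (ax a); rewrite !in_app_iff; simpl; auto.
          - apply NNPP; intro Hp; apply Hne. exists (exist _ bs Hbs). split; auto.
            intro Hc; apply Hp. unfold sl, cm, nbw in Hc; simpl in Hc. wk Hc. }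
        apply adj2 in H1.
        assert (H2 : pv [] [nbw w; FBoxC p a]) by wk H1.
        apply nb_R_inv in H2. unfold sl, cm. wk H2. }
      destruct Hex as [u [Hu Hc]]. apply Hu. apply (IHn a); auto. lia.
      apply H. apply existence; auto.
    + intros Hin u Hr. apply (IHn a); auto. lia. eapply boxc_down; eauto.
Qed.

Lemma truth_main a : In a C -> forall w : W, sat M w a <-> In a (sl w).
Proof. intro H. apply (truth (n := S (fsize a))); auto. Qed.

End Main.

Theorem mainTheorem2 (Prp AtProg : Type) (G D : list (form Prp AtProg)) :
  valid (G, D) -> provable G D.
Proof.
  intro Hv. apply NNPP; intro Hn.
  set (C := closure (G ++ D)).
  destruct (lindenbaum C Hn) as [bs [Hl Hb]].
  assert (Hat : isAtom C bs) by (split; auto; intro Hc; apply Hb; wk Hc).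
  assert (HCc : closedC C) by apply closure_closed.
  pose (w := exist _ bs Hat : W C).
  assert (HCin : forall f, In f (G ++ D) -> In f C) by (intros; apply closure_incl; auto).
  destruct (Hv (M Hat) w) as [psi [Hpsi Hs]].
  - intros f Hf. simpl in Hf. apply (truth_main HCc Hat). apply HCin; apply in_or_app; auto.
    destruct (part C bs f Hl (HCin f (in_or_app _ _ _ (or_introl Hf)))) as [H|H]; auto.
    exfalso; apply Hb; apply (ax f); rewrite !in_app_iff; auto.
  - simpl in Hpsi. apply (truth_main HCc Hat) in Hs.
    2: { apply HCin; apply in_or_app; auto. }
    apply Hb. apply (ax psi); rewrite !in_app_iff; auto.
Qed.
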